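(* For every $n\ge1$, $$\sum_{\sigma\in\mathfrak S_n}(xy)^{{\rm L}(\sigma)}\Bigl(\frac{x+y}{2}\Bigr)^{n-2{\rm L}(\sigma)}\beta^{{\rm RLmin}(\sigma)}=\sum_{k=1}^n\binom nk\frac{(\beta(y-x))^{n-k}}{2^{n-k}}\Bigl(\sum_{\sigma\in\mathfrak S_k}x^{{\rm des}(\sigma)+1}y^{{\rm asc}(\sigma)}\beta^{{\rm LRmin}(\sigma)}\Bigr)+\Bigl(\frac{\beta(y-x)}{2}\Bigr)^n.$$
   Context: For $\sigma=\sigma_1\cdots\sigma_m\in\mathfrak S_m$: ${\rm asc}(\sigma)$, ${\rm des}(\sigma)$ are the numbers of $i\in[m-1]$ with $\sigma_i<\sigma_{i+1}$, resp. $\sigma_i>\sigma_{i+1}$; ${\rm L}(\sigma)$ is the number of $i$ with $1\le i<m$ and $\sigma_{i-1}<\sigma_i>\sigma_{i+1}$ (convention $\sigma_0=0$); ${\rm LRmin}(\sigma)$ is the number of $i$ with $\sigma_j>\sigma_i$ for all $j<i$; ${\rm RLmin}(\sigma)$ is the number of $i$ with $\sigma_j>\sigma_i$ for all $j>i$. *)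

(* Defs.v *)
From mathcomp Require Import all_boot all_order all_algebra all_fingroup.
Set Implicit Arguments. Unset Strict Implicit. Unset Printing Implicit Defensive.

(* One-line notation of a permutation s of 'I_m, with values shifted to 1..m:
   word s = [:: sigma_1; ...; sigma_m]. *)
Definition word (m : nat) (s : 'S_m) : seq nat := [seq (s i).+1 | i <- enum 'I_m].

(* Statistics on a word w = w_1 ... w_m, stored 0-indexed: nth 0 w j = w_(j+1). *)
Definition asc_w (w : seq nat) : nat :=
  count (fun j => nth 0 w j < nth 0 w j.+1) (iota 0 (size w).-1).
Definition des_w (w : seq nat) : nat :=
  count (fun j => nth 0 w j > nth 0 w j.+1) (iota 0 (size w).-1).
(* L: #{1 <= i < m | w_(i-1) < w_i > w_(i+1)}, with w_0 = 0;
   note nth 0 (0 :: w) j = w_(j) (1-indexed) = w_0 = 0 when j = 0. *)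
Definition L_w (w : seq nat) : nat :=
  count (fun j => (nth 0 (0 :: w) j < nth 0 w j) && (nth 0 w j > nth 0 w j.+1))
        (iota 0 (size w).-1).
Definition LRmin_w (w : seq nat) : nat :=
  count (fun j => all (fun k => nth 0 w k > nth 0 w j) (iota 0 j)) (iota 0 (size w)).
Definition RLmin_w (w : seq nat) : nat :=
  count (fun j => all (fun k => nth 0 w k > nth 0 w j) (iota j.+1 ((size w) - j.+1)))
        (iota 0 (size w)).

Definition asc (m : nat) (s : 'S_m) := asc_w (word s).
Definition des (m : nat) (s : 'S_m) := des_w (word s).
Definition Lpk (m : nat) (s : 'S_m) := L_w (word s).
Definition LRmin (m : nat) (s : 'S_m) := LRmin_w (word s).
Definition RLmin (m : nat) (s : 'S_m) := RLmin_w (word s).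

(* Main.v *)
Require Import Defs.
From mathcomp Require Import all_boot all_order all_algebra all_fingroup.
From mathcomp Require Import zify ring.

Definition ins (j N : nat) (w : seq nat) := take j w ++ N :: drop j w.

Fixpoint win3 (P : nat -> nat -> nat -> bool) (p : nat) (s : seq nat) : nat :=
  match s with
  | [::] => 0
  | b :: s' => (if s' is c :: _ then P p b c else false) + win3 P b s'
  end.

Lemma win3_cons P p b s :
  win3 P p (b :: s) = (if s is c :: _ then P p b c else false) + win3 P b s.
Proof. by []. Qed.

Lemma win3_count P p w :
  count (fun i => P (nth 0 (p::w) i) (nth 0 w i) (nth 0 w i.+1)) (iota 0 (size w).-1)
  = win3 P p w.
Proof.
elim: w p => [|b w IH] p; first by [].
case: w IH => [|c w] IH; first by [].
rewrite win3_cons -IH /= -[1]/(1 + 0) iotaDl count_map.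
by congr (_ + _).
Qed.

Lemma win3_cat P p s a t :
  win3 P p (s ++ a :: t) =
  win3 P p (rcons s a) + (if t is c :: _ then P (last p s) a c else false) + win3 P a t.
Proof.
elim: s p => [|x s IH] p /=; first by case: t.
rewrite IH; case: s IH => [|z s] IH /=; lia.
Qed.

Fixpoint RL (s : seq nat) : nat :=
  if s is b :: s' then all (fun k => b < k) s' + RL s' else 0.

Fixpoint LR (p s : seq nat) : nat :=
  if s is b :: s' then all (fun k => b < k) p + LR (b :: p) s' else 0.

Lemma RLmin_RL w : RLmin_w w = RL w.
Proof.
rewrite /RLmin_w.
rewrite (eq_count (a2 := fun j => all (fun k => nth 0 w j < k) (drop j.+1 w))); last first.
  move=> j /=; rewrite -[in RHS](take_size (drop j.+1 w)) size_drop -(map_nth_iota 0) //.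
  by rewrite all_map.
elim: w => [|b w IH] //.
rewrite /= -IH -[1]/(1 + 0) iotaDl count_map.
by congr (_ + _); rewrite drop0.
Qed.

Lemma LRmin_LR w : LRmin_w w = LR [::] w.
Proof.
rewrite /LRmin_w.
rewrite (eq_in_count (a2 := fun j => all (fun k => nth 0 w j < k) ([::] ++ take j w))); last first.
  move=> j; rewrite mem_iota add0n => /andP[_ hj].
  by rewrite cat0s -(map_nth_iota0 0) ?all_map // ltnW.
elim: w [::] => [|b w IH] p //.
rewrite /= -IH -[1]/(1 + 0) iotaDl count_map cats0.
congr (_ + _); apply: eq_count => j /=.
by rewrite !all_cat /= andbCA.
Qed.

Lemma all_gtN N p : all (fun k => k < N) p -> all (fun k => N < k) p = (p == [::]).
Proof. by case: p => [|b p] //= /andP[h _]; rewrite ltnNge ltnW. Qed.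

Lemma RL_ins s v N : all (fun k => k < N) s -> all (fun k => k < N) v ->
  RL (s ++ N :: v) = RL (s ++ v) + (v == [::]).
Proof.
move=> hs hv; elim: s hs => [|b s IH] /=.
  by move=> _; rewrite all_gtN // addnC.
move=> /andP[hb hs]; rewrite IH // all_cat /= hb all_cat; lia.
Qed.

Lemma LR_ext p1 p2 v : (forall x, x \in v -> all (fun k => x < k) p1 = all (fun k => x < k) p2) ->
  LR p1 v = LR p2 v.
Proof.
elim: v p1 p2 => [|b v IH] p1 p2 h //=.
rewrite h ?mem_head //; congr (_ + _); apply: IH => x hx /=.
by rewrite h // inE hx orbT.
Qed.

Lemma LR_ins p s v N : all (fun k => k < N) p -> all (fun k => k < N) s ->
  all (fun k => k < N) v ->
  LR p (s ++ N :: v) = LR p (s ++ v) + ((p == [::]) && (s == [::])).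
Proof.
move=> hp hs hv; elim: s p hp hs => [|b s IH] p hp /=.
  move=> _; rewrite all_gtN // andbT addnC; congr (_ + _).
  apply: LR_ext => x hx /=; move/allP: hv => /(_ x hx) ->; by [].
move=> /andP[hb hs]; rewrite IH //= ?hb ?hp // andbF; lia.
Qed.

Lemma last_take w k : k <= size w -> last 0 (take k w) = nth 0 (0 :: w) k.
Proof.
move=> hk; rewrite (last_nth 0) size_take_min (minn_idPl hk).
by case: k hk => [|k] hk //=; rewrite nth_take.
Qed.

Lemma drop_case (P : nat -> nat -> nat -> bool) x c w j :
  (if drop j.+1 w is d :: _ then P x c d else false)
  = (j < (size w).-1) && P x c (nth 0 w j.+1).
Proof.
case: (ltnP j.+1 (size w)) => h.
  by rewrite (drop_nth 0 h); have -> : j < (size w).-1 by lia.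
by rewrite drop_oversize //; have -> : j < (size w).-1 = false by lia.
Qed.

Lemma win3_mid P N w j : 0 < j < size w ->
  win3 P 0 (ins j N w) + P (nth 0 (0::w) j.-1) (nth 0 w j.-1) (nth 0 w j)
    + ((j < (size w).-1) && P (nth 0 w j.-1) (nth 0 w j) (nth 0 w j.+1))
  = win3 P 0 w + P (nth 0 (0::w) j.-1) (nth 0 w j.-1) N + P (nth 0 w j.-1) N (nth 0 w j)
    + ((j < (size w).-1) && P N (nth 0 w j) (nth 0 w j.+1)).
Proof.
case: j => [|j] // /andP[_ hj] /=.
have hj' : j < size w by lia.
have ew : w = take j w ++ nth 0 w j :: nth 0 w j.+1 :: drop j.+2 w.
  by rewrite -(drop_nth 0 hj) -(drop_nth 0 hj') cat_take_drop.
have ei : ins j.+1 N w = take j w ++ nth 0 w j :: N :: nth 0 w j.+1 :: drop j.+2 w.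
  by rewrite /ins (take_nth 0 hj') -(drop_nth 0 hj) cat_rcons.
have -> : win3 P 0 w = win3 P 0 (take j w ++ nth 0 w j :: nth 0 w j.+1 :: drop j.+2 w) by rewrite -ew.
rewrite ei !win3_cat !win3_cons last_take; last by lia.
case: (ltnP j.+2 (size w)) => h.
  rewrite (drop_nth 0 h); have -> : j.+1 < (size w).-1 by lia.
  simpl; lia.
rewrite drop_oversize //; have -> : j.+1 < (size w).-1 = false by lia.
simpl; lia.
Qed.

Lemma win3_front P N w : 0 < size w ->
  win3 P 0 (ins 0 N w) + ((0 < (size w).-1) && P 0 (nth 0 w 0) (nth 0 w 1))
  = win3 P 0 w + P 0 N (nth 0 w 0) + ((0 < (size w).-1) && P N (nth 0 w 0) (nth 0 w 1)).
Proof.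
case: w => [|c [|d v]] //= _; rewrite /ins /=; lia.
Qed.

Lemma win3_end P N w : 0 < size w ->
  win3 P 0 (ins (size w) N w)
  = win3 P 0 w + P (nth 0 (0::w) (size w).-1) (nth 0 w (size w).-1) N.
Proof.
move=> h; have h' : (size w).-1 < size w by lia.
have ew : w = take (size w).-1 w ++ [:: nth 0 w (size w).-1].
  by rewrite cats1 -take_nth ?prednK // take_size.
rewrite /ins take_size drop_size [in LHS]ew -catA /= win3_cat /=.
rewrite -cats1 -ew last_take; last by lia.
lia.
Qed.

Fixpoint perms (n : nat) : seq (seq nat) :=
  if n is m.+1 then [seq ins j m.+1 w | w <- perms m, j <- iota 0 m.+1] else [:: [::]].

Lemma size_ap (s : seq (seq nat)) k N :
  size [seq ins j N w | w <- s, j <- iota 0 k] = size s * k.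
Proof. by elim: s => //= x s IH; rewrite size_cat size_map size_iota IH. Qed.

Lemma perms_size n : size (perms n) = n`!.
Proof.
elim: n => // n IH.
change (size [seq ins j n.+1 w | w <- perms n, j <- iota 0 n.+1] = n.+1`!).
by rewrite size_ap IH factS mulnC. Qed.

Lemma ins_perm j N w : perm_eq (ins j N w) (N :: w).
Proof.
by rewrite /ins -cat1s perm_catCA cat_take_drop.
Qed.

Lemma iota_rcons n : perm_eq (iota 1 n.+1) (n.+1 :: iota 1 n).
Proof. by rewrite -(addn1 n) iotaD cats1 perm_rcons add1n addn1. Qed.

Lemma perms_perm n w : w \in perms n -> perm_eq w (iota 1 n).
Proof.
elim: n w => [|n IH] w; first by rewrite inE => /eqP ->.
case/allpairsPdep => w0 [j [h0 _ ->]].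
rewrite (perm_trans (ins_perm _ _ _)) // -addn1 iotaD cats1 perm_sym perm_rcons add1n.
by rewrite addn1 perm_cons perm_sym IH.
Qed.

Lemma perm_in_perms n w : perm_eq w (iota 1 n) -> w \in perms n.
Proof.
elim: n w => [|n IH] w.
  by move=> /perm_size /= /size0nil ->; rewrite inE.
move=> hw.
have hN : n.+1 \in w by rewrite (perm_mem hw) mem_iota; lia.
set j := index n.+1 w.
set w0 := take j w ++ drop j.+1 w.
have hj : j < size w by rewrite index_mem.
have ew : w = ins j n.+1 w0.
  rewrite /ins /w0 take_cat size_take hj ltnn subnn take0 cats0 drop_cat size_take hj ltnn.
  by rewrite subnn drop0 -{1}(nth_index 0 hN) -drop_nth // cat_take_drop.
apply/allpairsPdep; exists w0, j; split => //.
- apply: IH; rewrite -(perm_cons n.+1).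
  have := ins_perm j n.+1 w0; rewrite -ew perm_sym => /perm_trans; apply.
  by apply: (perm_trans hw); rewrite iota_rcons.
- rewrite mem_iota add0n.
  have := perm_size hw; rewrite size_iota; lia.
Qed.

Lemma size_word n (s : 'S_n) : size (word s) = n.
Proof. by rewrite /word size_map size_enum_ord. Qed.

Lemma word_perm n (s : 'S_n) : perm_eq (word s) (iota 1 n).
Proof.
have hu : uniq (word s).
  rewrite /word map_inj_uniq ?enum_uniq // => i j [] /val_inj; exact: perm_inj.
have hsub : {subset word s <= iota 1 n}.
  move=> x /mapP [i _ ->]; rewrite mem_iota; have := ltn_ord (s i); lia.
have hsz : size (iota 1 n) <= size (word s) by rewrite size_iota size_word.
have [_ he] := uniq_min_size hu hsub hsz.
by apply: uniq_perm => //; rewrite iota_uniq.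
Qed.

Lemma nth_word n (s : 'S_n) (i : 'I_n) : nth 0 (word s) i = (s i).+1.
Proof.
by rewrite /word (nth_map i) ?size_enum_ord ?ltn_ord // nth_ord_enum.
Qed.

Lemma word_inj n : injective (@word n).
Proof.
move=> s t h; apply/permP => i; apply: val_inj.
by have := nth_word _ s i; rewrite h nth_word => -[].
Qed.

Lemma perm_word_perms n : perm_eq [seq word s | s <- enum 'S_n] (perms n).
Proof.
have hu : uniq [seq word s | s <- enum 'S_n] by rewrite map_inj_uniq ?enum_uniq //; exact: word_inj.
have hsub : {subset [seq word s | s <- enum 'S_n] <= perms n}.
  by move=> w /mapP [s _ ->]; apply: perm_in_perms; apply: word_perm.
have hsz : size (perms n) <= size [seq word s | s <- enum 'S_n].
  by rewrite size_map -cardE card_Sn perms_size.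
have [_ he] := uniq_min_size hu hsub hsz.
apply: uniq_perm => //; rewrite (uniq_size_uniq hu he); apply/eqP.
by have [] := uniq_min_size hu hsub hsz.
Qed.

Definition Ppk (a b c : nat) := (a < b) && (c < b).
Definition Pdes (a b c : nat) := c < b.
Definition Pasc (a b c : nat) := b < c.
Definition pkb w i := Ppk (nth 0 (0::w) i) (nth 0 w i) (nth 0 w i.+1).
Definition adj w j := ((0 < j) && pkb w j.-1) || ((j < (size w).-1) && pkb w j).

Lemma nth_lt N w i : all (fun k => k < N) w -> i < size w -> nth 0 w i < N.
Proof. by move=> /allP h hi; apply: h; rewrite mem_nth. Qed.
Arguments nth_lt {N w i}.

Lemma ins_end N w : ins (size w) N w = rcons w N.
Proof. by rewrite /ins take_size drop_size cats1. Qed.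

Lemma L_ins_end N w : all (fun k => k < N) w -> win3 Ppk 0 (ins (size w) N w) = win3 Ppk 0 w.
Proof.
move=> hw; case: (posnP (size w)) => h.
  by move/size0nil: h => ->.
rewrite win3_end // /Ppk.
have ha : nth 0 w (size w).-1 < N by apply: nth_lt hw _; lia.
by rewrite [N < _]ltnNge (ltnW ha) andbF addn0.
Qed.

Lemma L_ins_lt N w j : all (fun k => k < N) w -> j < size w ->
  win3 Ppk 0 (ins j N w) = win3 Ppk 0 w + ~~ adj w j.
Proof.
move=> hw hj; rewrite /adj /pkb.
case: j hj => [|j] hj.
  have := win3_front Ppk N w hj; rewrite /Ppk.
  have hc := nth_lt hw hj.
  rewrite hc [N < _]ltnNge (ltnW hc) /=.
  case: (_ < _); case: (_ < _); case: (_ < _); simpl; lia.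
have h1 : 0 < j.+1 < size w by rewrite hj.
have := win3_mid Ppk N w j.+1 h1; rewrite /Ppk /=.
have hc := nth_lt hw hj.
have ha := nth_lt hw (ltnW hj).
rewrite hc ha [N < nth 0 w j]ltnNge (ltnW ha) [N < nth 0 w j.+1]ltnNge (ltnW hc) /=.
case: (ltngtP (nth 0 w j) (nth 0 w j.+1)) => hac;
 case: (_ < _); case: (_ < _); case: (_ < _); simpl; lia.
Qed.

Lemma L_count w : count (pkb w) (iota 0 (size w).-1) = win3 Ppk 0 w.
Proof. exact: win3_count. Qed.

Lemma count_adj w : count (adj w) (iota 0 (size w)) = 2 * win3 Ppk 0 w.
Proof.
have hI : forall j, ((0 < j) && pkb w j.-1) && ((j < (size w).-1) && pkb w j) = false.
  case=> [|j] //=; rewrite /pkb /Ppk /=.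
  case: (ltngtP (nth 0 w j) (nth 0 w j.+1)); rewrite ?andbF ?andbT //.
have h := count_predUI (fun j => (0 < j) && pkb w j.-1)
   (fun j => (j < (size w).-1) && pkb w j) (iota 0 (size w)).
have h0 : count (predI (fun j => (0 < j) && pkb w j.-1)
   (fun j => (j < (size w).-1) && pkb w j)) (iota 0 (size w)) = 0.
  apply/eqP; rewrite eqn0Ngt -has_count; apply/hasPn => j _ /=; by rewrite hI.
rewrite h0 addn0 in h.
have -> : count (adj w) (iota 0 (size w)) = count (predU (fun j => (0 < j) && pkb w j.-1)
   (fun j => (j < (size w).-1) && pkb w j)) (iota 0 (size w)) by [].
rewrite h -L_count.
case E: (size w) => [|m]; first by [].
have c1 : count (fun j => (0 < j) && pkb w j.-1) (iota 0 m.+1) = count (pkb w) (iota 0 m).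
  by rewrite /= (iotaDl 1 0) count_map.
have c2 : count (fun j => (j < m) && pkb w j) (iota 0 m.+1) = count (pkb w) (iota 0 m).
  have -> : iota 0 m.+1 = iota 0 m ++ [:: m] by rewrite -(addn1 m) iotaD.
  rewrite count_cat /= ltnn /= addn0 addn0; apply: eq_in_count => j.
  by rewrite mem_iota => /andP[_ ->].
rewrite c1 c2 /=; lia.
Qed.

Lemma all_td N w j : all (fun k => k < N) w ->
  all (fun k => k < N) (take j w) && all (fun k => k < N) (drop j w).
Proof. by rewrite -{1}(cat_take_drop j w) all_cat. Qed.

Lemma RL_ins_end N w : all (fun k => k < N) w -> RL (ins (size w) N w) = (RL w).+1.
Proof.
by move=> hw; rewrite ins_end -cats1 (RL_ins w [::] N) // cats0 addn1.
Qed.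

Lemma RL_ins_lt N w j : all (fun k => k < N) w -> j < size w -> RL (ins j N w) = RL w.
Proof.
move=> hw hj; have /andP[h1 h2] := all_td N w j hw.
rewrite /ins RL_ins // cat_take_drop.
have : 0 < size (drop j w) by rewrite size_drop subn_gt0.
by case: (drop j w) => [|x v] //= _; rewrite addn0.
Qed.

Lemma LR_ins_front N w : all (fun k => k < N) w -> LR [::] (ins 0 N w) = (LR [::] w).+1.
Proof.
move=> hw; have /andP[h1 h2] := all_td N w 0 hw.
rewrite /ins (LR_ins [::]) // cat_take_drop take0 /=; lia.
Qed.

Lemma LR_ins_pos N w j : all (fun k => k < N) w -> 0 < j <= size w ->
  LR [::] (ins j N w) = LR [::] w.
Proof.
move=> hw /andP[hj hj']; have /andP[h1 h2] := all_td N w j hw.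
rewrite /ins (LR_ins [::]) // cat_take_drop.
have : 0 < size (take j w) by rewrite size_takel.
by case: (take j w) => [|x v] //= _; rewrite addn0.
Qed.

Lemma D_front N w : all (fun k => k < N) w -> 0 < size w ->
  win3 Pdes 0 (ins 0 N w) = (win3 Pdes 0 w).+1.
Proof.
move=> hw h; have := win3_front Pdes N w h; rewrite /Pdes (nth_lt hw h); lia.
Qed.

Lemma A_front N w : all (fun k => k < N) w -> 0 < size w ->
  win3 Pasc 0 (ins 0 N w) = win3 Pasc 0 w.
Proof.
move=> hw h; have := win3_front Pasc N w h; rewrite /Pasc.
rewrite [N < _]ltnNge (ltnW (nth_lt hw h)) /=; lia.
Qed.

Lemma D_end N w : all (fun k => k < N) w -> 0 < size w ->
  win3 Pdes 0 (ins (size w) N w) = win3 Pdes 0 w.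
Proof.
move=> hw h; rewrite win3_end // /Pdes.
have ha : nth 0 w (size w).-1 < N by apply: nth_lt hw _; lia.
by rewrite ltnNge (ltnW ha) addn0.
Qed.

Lemma A_end N w : all (fun k => k < N) w -> 0 < size w ->
  win3 Pasc 0 (ins (size w) N w) = (win3 Pasc 0 w).+1.
Proof.
move=> hw h; rewrite win3_end // /Pasc.
have ha : nth 0 w (size w).-1 < N by apply: nth_lt hw _; lia.
by rewrite ha addn1.
Qed.

Lemma D_mid N w j : all (fun k => k < N) w -> 0 < j < size w ->
  win3 Pdes 0 (ins j N w) + (nth 0 w j < nth 0 w j.-1) = (win3 Pdes 0 w).+1.
Proof.
move=> hw h; have := win3_mid Pdes N w j h; rewrite /Pdes.
have hc : nth 0 w j < N by apply: nth_lt hw _; lia.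
have ha : nth 0 w j.-1 < N by apply: nth_lt hw _; lia.
rewrite hc [N < nth 0 w j.-1]ltnNge (ltnW ha) /=; lia.
Qed.

Lemma A_mid N w j : all (fun k => k < N) w -> 0 < j < size w ->
  win3 Pasc 0 (ins j N w) + (nth 0 w j.-1 < nth 0 w j) = (win3 Pasc 0 w).+1.
Proof.
move=> hw h; have := win3_mid Pasc N w j h; rewrite /Pasc.
have hc : nth 0 w j < N by apply: nth_lt hw _; lia.
have ha : nth 0 w j.-1 < N by apply: nth_lt hw _; lia.
rewrite ha [N < nth 0 w j]ltnNge (ltnW hc) /=; lia.
Qed.

Lemma L_wE w : L_w w = win3 Ppk 0 w. Proof. exact: win3_count. Qed.
Lemma des_wE w : des_w w = win3 Pdes 0 w. Proof. exact: win3_count. Qed.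
Lemma asc_wE w : asc_w w = win3 Pasc 0 w. Proof. exact: win3_count. Qed.

Lemma size_ins j N w : size (ins j N w) = (size w).+1.
Proof. by rewrite /ins size_cat /= addnS -size_cat cat_take_drop. Qed.

Lemma count_des w : count (fun j => nth 0 w j < nth 0 w j.-1) (iota 1 (size w).-1) = win3 Pdes 0 w.
Proof. by rewrite -des_wE /des_w (iotaDl 1 0) count_map. Qed.

Lemma count_asc w : count (fun j => nth 0 w j.-1 < nth 0 w j) (iota 1 (size w).-1) = win3 Pasc 0 w.
Proof. by rewrite -asc_wE /asc_w (iotaDl 1 0) count_map. Qed.


Import GRing.Theory Num.Theory.
Local Open Scope ring_scope.

Section Poly.
Variables (R : numFieldType) (e b : R).

Definition Xm : {poly R} := 'X - e%:P.
Definition Yp : {poly R} := 'X + e%:P.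
Definition Bc : {poly R} := b%:P.
Definition Fp (w : seq nat) : {poly R} :=
  (Xm * Yp) ^+ win3 Ppk 0 w * 'X^(size w - 2 * win3 Ppk 0 w) * Bc ^+ RL w.
Definition Gp (w : seq nat) : {poly R} :=
  Xm ^+ (win3 Pdes 0 w).+1 * Yp ^+ win3 Pasc 0 w * Bc ^+ LR [::] w.
Definition Qop (p : {poly R}) := 'X * Bc * p + Xm * Yp * p^`().
Definition Pop (p : {poly R}) := Xm * Bc * p + Xm * Yp * p^`().

Lemma sum_if (s : seq nat) (a : pred nat) (A B : {poly R}) :
  \sum_(j <- s) (if a j then A else B) = A *+ count a s + B *+ count (predC a) s.
Proof.
elim: s => [|x s IH]; first by rewrite big_nil !mulr0n addr0.
rewrite big_cons IH /=; case: (a x) => /=; rewrite ?mulrS; ring.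
Qed.

Lemma dXY : (Xm * Yp)^`() = 'X *+ 2.
Proof. by rewrite derivM /Xm /Yp derivXsubC derivD derivX derivC; ring. Qed.
Lemma dXm : Xm^`() = 1. Proof. by rewrite derivXsubC. Qed.
Lemma dYp : Yp^`() = 1. Proof. by rewrite /Yp derivD derivX derivC addr0. Qed.
Lemma dB : Bc^`() = 0. Proof. exact: derivC. Qed.
Lemma dBc r : (Bc ^+ r)^`() = 0. Proof. by rewrite deriv_exp derivC mul0r mul0rn. Qed.

Lemma F_step N w : all (fun k => (k < N)%N) w ->
  \sum_(j <- iota 0 (size w).+1) Fp (ins j N w) = Qop (Fp w).
Proof.
move=> hw.
have hL : (2 * win3 Ppk 0 w <= size w)%N.
  by rewrite -count_adj; have := count_size (adj w) (iota 0 (size w)); rewrite size_iota.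
have hc := count_adj w.
have hc' := count_predC (adj w) (iota 0 (size w)); rewrite size_iota in hc'.
rewrite -(addn1 (size w)) iotaD big_cat big_seq1 add0n.
rewrite (eq_big_seq (fun j => if adj w j then
     (Xm * Yp) ^+ win3 Ppk 0 w * 'X^((size w).+1 - 2 * win3 Ppk 0 w) * Bc ^+ RL w
   else (Xm * Yp) ^+ (win3 Ppk 0 w).+1 * 'X^((size w).+1 - 2 * (win3 Ppk 0 w).+1) * Bc ^+ RL w)); last first.
  move=> j; rewrite mem_iota add0n => /andP[_ hj].
  rewrite /Fp size_ins (L_ins_lt _ _ _ hw hj) (RL_ins_lt _ _ _ hw hj).
  by case: (adj w j) => /=; rewrite ?addn0 ?addn1.
rewrite sum_if /Fp size_ins (L_ins_end _ _ hw) (RL_ins_end _ _ hw) /=.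
have hp : count (predC (adj w)) (iota 0 (size w)) = (size w - 2 * win3 Ppk 0 w)%N by lia.
rewrite hc hp.
move: (win3 Ppk 0 w) (size w) (RL w) hL => L m r hL.
have e1 : (m.+1 - 2 * L = (m - 2 * L).+1)%N by lia.
have e2 : (m.+1 - 2 * L.+1 = (m - 2 * L).-1)%N by lia.
rewrite e1 e2; move: (m - 2 * L)%N => k; clear e1 e2 hL.
rewrite /Qop !derivM deriv_exp dXY derivXn dBc.
case: L => [|L]; case: k => [|k] /=; rewrite ?expr0 ?exprS ?mul0rn ?mulr0n; ring.
Qed.

Lemma G_step N w : all (fun k => (k < N)%N) w -> uniq w -> (0 < size w)%N ->
  \sum_(j <- iota 0 (size w).+1) Gp (ins j N w) = Pop (Gp w).
Proof.
move=> hw hu hs.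
have hd := count_des w; have ha := count_asc w.
have hc' := count_predC (fun j => nth 0 w j < nth 0 w j.-1)%N (iota 1 (size w).-1).
rewrite size_iota in hc'.
have hpa : count (predC (fun j => nth 0 w j < nth 0 w j.-1)%N) (iota 1 (size w).-1)
    = win3 Pasc 0 w.
  rewrite -ha; apply: eq_in_count => j; rewrite mem_iota => /andP[h1 h2] /=.
  move: j h1 h2; case=> [|j] // h1 h2 /=.
  have hj1 : (j < size w)%N by lia.
  have hj2 : (j.+1 < size w)%N by lia.
  have hne : nth 0 w j != nth 0 w j.+1 by rewrite nth_uniq // (ltn_eqF (ltnSn j)).
  by case: ltngtP hne => //= ->; rewrite eqxx.
have eio : iota 0 (size w).+1 = 0 :: (iota 1 (size w).-1 ++ [:: size w]).
  case: (size w) hs => // m _.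
  by rewrite -(addn1 m.+1) iotaD.
rewrite eio big_cons big_cat big_seq1.
rewrite (eq_big_seq (fun j => if (nth 0 w j < nth 0 w j.-1)%N then
     Xm ^+ (win3 Pdes 0 w).+1 * Yp ^+ (win3 Pasc 0 w).+1 * Bc ^+ LR [::] w
   else Xm ^+ (win3 Pdes 0 w).+2 * Yp ^+ win3 Pasc 0 w * Bc ^+ LR [::] w)); last first.
  move=> j; rewrite mem_iota => /andP[h1 h2].
  have hj : (0 < j < size w)%N by lia.
  have hD := D_mid _ _ _ hw hj; have hA := A_mid _ _ _ hw hj.
  have hj1 : (j.-1 < size w)%N by lia.
  have hj2 : (j < size w)%N by lia.
  have hj3 : (j.-1 < j)%N by lia.
  have hne : nth 0 w j.-1 != nth 0 w j by rewrite nth_uniq // (ltn_eqF hj3).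
  rewrite /Gp (LR_ins_pos _ _ _ hw (_ : (0 < j <= size w)%N)); last by lia.
  case: (ltngtP (nth 0 w j) (nth 0 w j.-1)) hD hA => hca hD hA.
  - have -> : win3 Pdes 0 (ins j N w) = win3 Pdes 0 w by lia.
    by have -> : win3 Pasc 0 (ins j N w) = (win3 Pasc 0 w).+1 by lia.
  - have -> : win3 Pdes 0 (ins j N w) = (win3 Pdes 0 w).+1 by lia.
    by have -> : win3 Pasc 0 (ins j N w) = win3 Pasc 0 w by lia.
  - by rewrite hca eqxx in hne.
rewrite sum_if hd hpa /Gp (D_front _ _ hw hs) (A_front _ _ hw hs) (LR_ins_front _ _ hw).
rewrite (D_end _ _ hw hs) (A_end _ _ hw hs) (LR_ins_pos _ _ _ hw (_ : (0 < size w <= size w)%N)); last by lia.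
move: (win3 Pdes 0 w) (win3 Pasc 0 w) (LR [::] w) => d a r.
rewrite /Pop !derivM !deriv_exp dXm dYp dB mul0r mul0rn.
case: a => [|a] /=; rewrite ?expr0 ?exprS ?mul0rn ?mulr0n ?mulr1n; ring.
Qed.

Lemma QopD p q : Qop (p + q) = Qop p + Qop q.
Proof. rewrite /Qop derivD; ring. Qed.
Lemma Qop0 : Qop 0 = 0.
Proof. rewrite /Qop deriv0; ring. Qed.
Lemma PopD p q : Pop (p + q) = Pop p + Pop q.
Proof. rewrite /Pop derivD; ring. Qed.
Lemma Pop0 : Pop 0 = 0.
Proof. rewrite /Pop deriv0; ring. Qed.
Lemma PopC a p : Pop (a%:P * p) = a%:P * Pop p.
Proof. rewrite /Pop derivM derivC; ring. Qed.
Lemma QopE p : Qop p = Pop p + (b * e)%:P * p.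
Proof. rewrite /Qop /Pop /Xm /Bc polyCM; ring. Qed.

Lemma Qop_sum (s : seq (seq nat)) (f : seq nat -> {poly R}) :
  Qop (\sum_(w <- s) f w) = \sum_(w <- s) Qop (f w).
Proof. exact: (big_morph Qop QopD Qop0). Qed.
Lemma Pop_sum (I : Type) (s : seq I) (f : I -> {poly R}) :
  Pop (\sum_(w <- s) f w) = \sum_(w <- s) Pop (f w).
Proof. exact: (big_morph Pop PopD Pop0). Qed.

Lemma perms_prop n w : w \in perms n ->
  [/\ all (fun k => (k < n.+1)%N) w, uniq w & size w = n].
Proof.
move=> /perms_perm h; split.
- apply/allP => x; rewrite (perm_mem h) mem_iota; lia.
- by rewrite (perm_uniq h) iota_uniq.
- by rewrite (perm_size h) size_iota.
Qed.

Lemma sumF n : \sum_(w <- perms n) Fp w = iter n Qop 1.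
Proof.
elim: n => [|n IH].
  by rewrite /= big_seq1 /Fp /= !expr0 !mulr1.
change (\sum_(w <- [seq ins j n.+1 w | w <- perms n, j <- iota 0 n.+1]) Fp w = Qop (iter n Qop 1)).
rewrite big_allpairs_dep -IH Qop_sum; apply: eq_big_seq => w hw.
have [h1 _ h3] := perms_prop _ _ hw.
by rewrite -(F_step _ _ h1) h3.
Qed.

Lemma sumG k : \sum_(w <- perms k.+1) Gp w = iter k.+1 Pop 1.
Proof.
elim: k => [|k IH].
  rewrite /= big_seq1 /Gp /Pop /= derivC expr0 expr1 !mulr1 addn0 expr1; ring.
change (\sum_(w <- [seq ins j k.+2 w | w <- perms k.+1, j <- iota 0 k.+2]) Gp w = Pop (iter k.+1 Pop 1)).
rewrite big_allpairs_dep -IH Pop_sum; apply: eq_big_seq => w hw.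
have [h1 h2 h3] := perms_prop _ _ hw.
by rewrite -(G_step _ _ h1 h2) ?h3.
Qed.

Lemma PopZ a p : Pop (a *: p) = a *: Pop p.
Proof. by rewrite -!mul_polyC PopC. Qed.
Lemma QopE' p : Qop p = Pop p + (b * e) *: p.
Proof. by rewrite QopE mul_polyC. Qed.

Lemma iterQ n : iter n Qop 1 =
  \sum_(k < n.+1) ('C(n, k)%:R * (b * e) ^+ (n - k)) *: iter k Pop 1.
Proof.
set c := b * e.
elim: n => [|n IH].
  by rewrite big_ord1 /= bin0 expr0 mulr1 scale1r.
rewrite [iter n.+1 Qop 1]/= IH QopE' Pop_sum scaler_sumr -/c.
under eq_bigr do rewrite PopZ.
rewrite [RHS]big_ord_recl.
rewrite [X in _ = _ + X](eq_bigr (fun k : 'I_n.+1 => ('C(n,k)%:R * c^+(n-k)) *: iter k.+1 Pop 1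
   + ('C(n,k.+1)%:R * c^+(n-k)) *: iter k.+1 Pop 1)); last first.
  move=> k _; rewrite /bump /= binS natrD -scalerDl; congr (_ *: _); ring.
rewrite big_split /= addrCA; congr (_ + _).
rewrite big_ord_recl [X in _ = _ + X]big_ord_recr /=.
rewrite (bin_small (ltnSn n)) mul0r scale0r addr0.
rewrite !bin0 !subn0 scalerA exprS; congr (_ + _); first by congr (_ *: _); ring.
apply: eq_bigr => k _; rewrite scalerA /bump /= add0n; congr (_ *: _).
by rewrite -(subnSK (ltn_ord k)) exprS; ring.
Qed.

End Poly.


Lemma sum_word (V : nmodType) n (F : seq nat -> V) :
  \sum_(s : 'S_n) F (word s) = \sum_(w <- perms n) F w.
Proof.
rewrite -(perm_big _ (perm_word_perms n)) big_map.
by rewrite enumT.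
Qed.

Theorem theorem6p5 (R : numFieldType) (x y b : R) (n : nat) (hn : (1 <= n)%N) :
  \sum_(s : 'S_n) (x * y) ^+ Lpk s * ((x + y) / 2%:R) ^+ (n - 2 * Lpk s)%N * b ^+ RLmin s
  = \sum_(1 <= k < n.+1)
      'C(n, k)%:R * ((b * (y - x)) ^+ (n - k) / 2%:R ^+ (n - k))
        * (\sum_(s : 'S_k) x ^+ (des s).+1 * y ^+ asc s * b ^+ LRmin s)
    + (b * (y - x) / 2%:R) ^+ n.
Proof.
set e := (y - x) / 2%:R; set v := (x + y) / 2%:R.
have h2 : (2%:R : R) != 0 by rewrite pnatr_eq0.
have hX : (Xm R e).[v] = x by rewrite /Xm !hornerE /v /e; field.
have hY : (Yp R e).[v] = y by rewrite /Yp !hornerE /v /e; field.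
have hB : (Bc R b).[v] = b by rewrite /Bc hornerC.
have -> : \sum_(s : 'S_n) (x * y) ^+ Lpk s * v ^+ (n - 2 * Lpk s)%N * b ^+ RLmin s
    = \sum_(k < n.+1) ('C(n, k)%:R * (b * e) ^+ (n - k)) * (iter k (Pop R e b) 1).[v].
  transitivity ((iter n (Qop R e b) 1).[v]).
    rewrite -sumF -sum_word horner_sum; apply: eq_bigr => s _.
    rewrite /Fp !(hornerM, horner_exp, hornerXn) hX hY hB size_word.
    by rewrite /Lpk L_wE /RLmin RLmin_RL hornerX.
  by rewrite iterQ horner_sum; apply: eq_bigr => k _; rewrite hornerZ.
rewrite big_ord_recl addrC; congr (_ + _); last first.
  by rewrite /= bin0 subn0 /e mulrA hornerC mulr1 mul1r.
rewrite big_add1 big_mkord; apply: eq_bigr => k _.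
have he : forall m, (b * e) ^+ m = (b * (y - x)) ^+ m / 2%:R ^+ m.
  by move=> m; rewrite /e mulrA expr_div_n.
rewrite /bump /= he add0n; congr (_ * _).
rewrite -[Pop R e b _]/(iter k.+1 (Pop R e b) 1).
rewrite -sumG -sum_word horner_sum; apply: eq_bigr => s _.
rewrite /Gp !(hornerM, horner_exp) hX hY hB.
by rewrite /des des_wE /asc asc_wE /LRmin LRmin_LR.
Qed.
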